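(* Let $n\ge 1$ and let $\mathbf{A},\mathbf{B}\in\mathbb{R}^{n\times n}$ be non-singular diagonalizable matrices such that: (i) $\mathbf{A}^q=a\mathbf{I}$ for some positive integer $q\le n$ and some scalar $a\neq 0$; (ii) $\mathbf{I}-a\mathbf{B}^q$ is nonsingular; (iii) the eigenvalues of $\mathbf{B}$ have pairwise distinct absolute values. Define $$S_{\mathbf{A},\mathbf{B}}=\{\mathbf{M}\in\mathbb{R}^{n\times n}\;:\;\exists\,\mathbf{g},\mathbf{h}\in\mathbb{R}^n \text{ with } \mathbf{M}-\mathbf{A}\mathbf{M}\mathbf{B}=\mathbf{g}\mathbf{h}^T\}.$$ Then for every vector $\mathbf{v}\in\mathbb{R}^n$ there exist a matrix $\mathbf{M}\in S_{\mathbf{A},\mathbf{B}}$ and an index $i\in\{1,\dots,n\}$ such that the $i$-th column of $\mathbf{M}$ equals $\mathbf{v}$.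
   Context: For $\mathbf{A},\mathbf{B}\in\mathbb{R}^{n\times n}$, the Stein displacement of $\mathbf{M}\in\mathbb{R}^{n\times n}$ is $\Delta_{\mathbf{A},\mathbf{B}}(\mathbf{M})=\mathbf{M}-\mathbf{A}\mathbf{M}\mathbf{B}$; $S_{\mathbf{A},\mathbf{B}}$ is the set of matrices whose Stein displacement is of the form $\mathbf{g}\mathbf{h}^T$ (rank at most one). *)

(* Defs.v *)
From HB Require Import structures.
From mathcomp Require Import all_boot all_order all_algebra.
From mathcomp Require Import complex.
Set Implicit Arguments. Unset Strict Implicit. Unset Printing Implicit Defensive.
Import Order.TTheory GRing.Theory Num.Theory.
Local Open Scope ring_scope.

(* Real matrices are modeled over an arbitrary real closed field R;
   eigenvalues / diagonalizability are taken over the complexification R[i]. *)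

Definition mxC (R : rcfType) (m n : nat) (M : 'M[R]_(m, n)) : 'M[R[i]]_(m, n) :=
  map_mx (fun x : R => (x%:C)%C) M.

Definition stein_disp (R : rcfType) (n : nat) (A B M : 'M[R]_n) : 'M[R]_n :=
  M - A *m M *m B.

Definition in_S (R : rcfType) (n : nat) (A B M : 'M[R]_n) : Prop :=
  exists g h : 'cV[R]_n, stein_disp A B M = g *m h^T.

Definition eig_distinct_abs (R : rcfType) (n : nat) (B : 'M[R]_n) : Prop :=
  exists s : 'I_n -> R[i],
    char_poly (mxC B) = \prod_(k < n) ('X - (s k)%:P) /\
    (forall k l : 'I_n, k != l -> `|s k| != `|s l|).

(* Main.v *)
Require Import Defs.
From HB Require Import structures.
From mathcomp Require Import all_boot all_order all_algebra.
From mathcomp Require Import complex.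
Import Order.TTheory GRing.Theory Num.Theory.
Local Open Scope ring_scope.

Lemma real_eig (R : rcfType) (n : nat) (B : 'M[R]_n) :
  (0 < n)%N -> eig_distinct_abs B -> exists r : R, root (char_poly B) r.
Proof.
move=> hn [s [hs hd]].
set i0 := Ordinal hn.
set z := s i0.
have hmap : char_poly (mxC B) = map_poly (real_complex R) (char_poly B).
  by rewrite /mxC map_char_poly.
have rz : root (char_poly (mxC B)) z.
  rewrite hs rootE horner_prod; apply/prodf_eq0; exists i0 => //.
  by rewrite hornerXsubC subrr.
have rzc : root (char_poly (mxC B)) (z^*)%C.
  rewrite -complex_root_conj hmap -map_poly_comp.
  have -> : map_poly (conjc \o real_complex R) (char_poly B)
           = map_poly (real_complex R) (char_poly B).
    by apply: eq_map_poly => x /=; rewrite /conjc /= oppr0.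
  by rewrite -hmap.
move: rzc; rewrite hs rootE horner_prod => /prodf_eq0 [l _].
rewrite hornerXsubC subr_eq0 => /eqP hl.
have hl0 : l = i0.
  apply/eqP; apply: contraLR isT => /hd; rewrite -hl normcJ /z eqxx //.
move: hl; rewrite hl0 -/z.
case E: z => [a b] /= [hb].
exists a.
have : root (char_poly (mxC B)) z by [].
rewrite hmap E.
have -> : b = 0.
  have : b *+ 2 == 0 by rewrite mulr2n -{1}hb addNr.
  by rewrite mulrn_eq0 /= => /eqP.
by rewrite complexr0 fmorph_root.
Qed.

Theorem theorem1 (R : rcfType) (n : nat) (A B : 'M[R]_n) (q : nat) (a : R) :
  (0 < n)%N ->
  A \in unitmx -> B \in unitmx ->
  diagonalizable (mxC A) -> diagonalizable (mxC B) ->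
  (0 < q <= n)%N -> a != 0 -> A ^+ q = a%:M ->
  (1%:M - a *: B ^+ q) \in unitmx ->
  eig_distinct_abs B ->
  forall v : 'cV[R]_n, exists M : 'M[R]_n, in_S A B M /\ exists i : 'I_n, col i M = v.
Proof.
move=> hn _ _ _ _ _ _ _ _ hB v.
have [r hr] := @real_eig R n B hn hB.
move: hr; rewrite -eigenvalue_root_char => /eigenvalueP [w hw wn0].
have [i hi] : exists i, w ord0 i != 0.
  case: (pickP (fun i => w ord0 i != 0)) => [i hi|h]; first by exists i.
  case/negP: wn0; apply/eqP/matrixP => x y; rewrite ord1 mxE.
  by move: (h y) => /negbFE/eqP.
set w' := (w ord0 i)^-1 *: w.
have hw' : w' *m B = r *: w' by rewrite /w' -scalemxAl hw scalerA mulrC -scalerA.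
exists (v *m w'); split.
  exists (v - r *: (A *m v)), w'^T; rewrite trmxK /stein_disp.
  by rewrite mulmxBl -scalemxAl mulmxA -(mulmxA _ w') hw' scalemxAr.
exists i; apply/matrixP => x y.
have -> : y = ord0 by apply: val_inj; case: y => [[|//] ?].
rewrite [LHS]mxE mxE big_ord1.
by rewrite /w' mxE mulVf // mulr1.
Qed.
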